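(* Let $\mathbf{x}=(x_1,\ldots,x_d)^T\in\mathbb{R}^d$ be nonzero, $m<d$ a positive integer, $0<\alpha<1$, and $p_k=\alpha\frac{|x_k|}{\|\mathbf{x}\|_1}+(1-\alpha)\frac{x_k^2}{\|\mathbf{x}\|_2^2}$. Draw $t_1,\ldots,t_m\in[d]$ i.i.d. with $\mathbb{P}(t_j=k)=p_k$, and let $\mathbf{S}\in\mathbb{R}^{d\times m}$ have $j$-th column $\mathbf{e}_{t_j}/\sqrt{m p_{t_j}}$. Then $$\mathbb{E}[\mathbf{S}\mathbf{S}^T\mathbf{x}\mathbf{x}^T\mathbf{S}\mathbf{S}^T]=\sum_{k=1}^d\frac{x_k^2}{mp_k}\mathbf{e}_k\mathbf{e}_k^T+\frac{m-1}{m}\mathbf{x}\mathbf{x}^T,$$ $$\mathbb{E}[\mathbb{D}(\mathbf{S}\mathbf{S}^T\mathbf{x}\mathbf{x}^T\mathbf{S}\mathbf{S}^T)]=\sum_{k=1}^d\Big(\frac{1}{mp_k}+\frac{m-1}{m}\Big)x_k^2\mathbf{e}_k\mathbf{e}_k^T,$$ $$\mathbb{E}[(\mathbb{D}(\mathbf{S}\mathbf{S}^T\mathbf{x}\mathbf{x}^T\mathbf{S}\mathbf{S}^T))^2]=\sum_{k=1}^d\Big[\frac{1}{m^3p_k^3}+\frac{7(m-1)}{m^3p_k^2}+\frac{6(m^2-3m+2)}{m^3p_k}+\frac{m^3-6m^2+11m-6}{m^3}\Big]x_k^4\mathbf{e}_k\mathbf{e}_k^T,$$ $$\mathbb{E}[\mathbf{S}\mathbf{S}^T\mathbf{x}\mathbf{x}^T\mathbf{S}\mathbf{S}^T\,\mathbb{D}(\mathbf{S}\mathbf{S}^T\mathbf{x}\mathbf{x}^T\mathbf{S}\mathbf{S}^T)]=\big(\mathbb{E}[\mathbb{D}(\mathbf{S}\mathbf{S}^T\mathbf{x}\mathbf{x}^T\mathbf{S}\mathbf{S}^T)\,\mathbf{S}\mathbf{S}^T\mathbf{x}\mathbf{x}^T\mathbf{S}\mathbf{S}^T]\big)^T$$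 $$=\sum_{k=1}^d\Big[\frac{1}{m^3p_k^3}+\frac{6(m-1)}{m^3p_k^2}+\frac{3(m^2-3m+2)}{m^3p_k}\Big]x_k^4\mathbf{e}_k\mathbf{e}_k^T+\frac{m-1}{m^3}\mathbf{x}\mathbf{x}^T\mathbb{D}\big(\{\tfrac{x_k^2}{p_k^2}\}\big)+\frac{3(m^2-3m+2)}{m^3}\mathbf{x}\mathbf{x}^T\Big[\mathbb{D}\big(\{\tfrac{x_k^2}{p_k}\}\big)+\frac{m-3}{3}\mathbb{D}(\{x_k^2\})\Big],$$ and $$\mathbb{E}[(\mathbf{S}\mathbf{S}^T\mathbf{x}\mathbf{x}^T\mathbf{S}\mathbf{S}^T)^2]=\sum_{k=1}^d\Big[\frac{4(m-1)}{m^3p_k^2}+\frac{1}{m^3p_k^3}\Big]x_k^4\mathbf{e}_k\mathbf{e}_k^T+\sum_{k=1}^d\Big[\frac{\|\mathbf{x}\|_2^2(m^2-3m+2)}{m^3}+\frac{m-1}{m^3}\sum_{l=1}^d\frac{x_l^2}{p_l}\Big]\frac{x_k^2}{p_k}\mathbf{e}_k\mathbf{e}_k^T$$ $$+\Big[\frac{\|\mathbf{x}\|_2^2(m^3-6m^2+11m-6)}{m^3}+\frac{m^2-3m+2}{m^3}\sum_{l=1}^d\frac{x_l^2}{p_l}\Big]\mathbf{x}\mathbf{x}^T+\mathbf{x}\mathbf{x}^T\Big[\frac{2(m^2-3m+2)}{m^3}\mathbb{D}\big(\{\tfrac{x_k^2}{p_k}\}\big)+\frac{m-1}{m^3}\mathbb{D}\big(\{\tfrac{x_k^2}{p_k^2}\}\big)\Big]$$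 $$+\Big[\frac{2(m^2-3m+2)}{m^3}\mathbb{D}\big(\{\tfrac{x_k^2}{p_k}\}\big)+\frac{m-1}{m^3}\mathbb{D}\big(\{\tfrac{x_k^2}{p_k^2}\}\big)\Big]\mathbf{x}\mathbf{x}^T.$$
   Context: $\mathbf{e}_1,\ldots,\mathbf{e}_d$ denote the standard basis vectors of $\mathbb{R}^d$, $[d]=\{1,\ldots,d\}$. For a square matrix $\mathbf{A}$, $\mathbb{D}(\mathbf{A})$ is the diagonal matrix having the same main diagonal as $\mathbf{A}$. For scalars $c_1,\ldots,c_d$, $\mathbb{D}(\{c_k\})$ denotes the $d\times d$ diagonal matrix with $c_1,\ldots,c_d$ on its diagonal (e.g. $\mathbb{D}(\{x_k^2/p_k\})$). Indices $k$ with $x_k=0$ have $p_k=0$; for such $k$ every term containing a factor $x_k^a/p_k^b$ ($a\ge 2$) is interpreted as $0$. *)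

(* Defs.v *)
From HB Require Import structures.
From mathcomp Require Import all_boot all_order all_algebra.
Set Implicit Arguments. Unset Strict Implicit. Unset Printing Implicit Defensive.
Import Order.TTheory GRing.Theory Num.Theory.
Local Open Scope ring_scope.

Section Defs.
Variables (R : rcfType) (d m : nat).

Definition xc (x : 'cV[R]_d) (k : 'I_d) : R := x k 0.

Definition norm1 (x : 'cV[R]_d) : R := \sum_k `|xc x k|.
Definition norm2sq (x : 'cV[R]_d) : R := \sum_k xc x k ^+ 2.

Definition pk (alpha : R) (x : 'cV[R]_d) (k : 'I_d) : R :=
  alpha * (`|xc x k| / norm1 x) + (1 - alpha) * (xc x k ^+ 2 / norm2sq x).

Definition Smat (p : 'I_d -> R) (t : {ffun 'I_m -> 'I_d}) : 'M[R]_(d, m) :=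
  \matrix_(i < d, j < m) ((i == t j)%:R / Num.sqrt (m%:R * p (t j))).

(* expectation over t_1,...,t_m i.i.d. with P(t_j = k) = p k *)
Definition Expect (a b : nat) (p : 'I_d -> R)
  (F : {ffun 'I_m -> 'I_d} -> 'M[R]_(a, b)) : 'M[R]_(a, b) :=
  \sum_(t : {ffun 'I_m -> 'I_d}) (\prod_(j < m) p (t j)) *: F t.

Definition Dg (A : 'M[R]_d) : 'M[R]_d := diag_mx (\row_i A i i).

Definition Dc (c : 'I_d -> R) : 'M[R]_d := diag_mx (\row_k c k).

Definition SSxxSS (p : 'I_d -> R) (x : 'cV[R]_d) (t : {ffun 'I_m -> 'I_d})
  : 'M[R]_d :=
  let S := Smat p t in S *m S^T *m (x *m x^T) *m S *m S^T.

End Defs.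

(* Main.v *)
Require Import Defs.
From HB Require Import structures.
From mathcomp Require Import all_boot all_order all_algebra.
From mathcomp Require Import ring lra.
Set Implicit Arguments. Unset Strict Implicit. Unset Printing Implicit Defensive.
Import Order.TTheory GRing.Theory Num.Theory.
Local Open Scope ring_scope.
Definition mu (R : rcfType) d (p : 'I_d -> R) (f : 'I_d -> R) := \sum_k p k * f k.
Definition Es (R : rcfType) d m (p : 'I_d -> R) (G : {ffun 'I_m -> 'I_d} -> R) :=
  \sum_(t : {ffun 'I_m -> 'I_d}) (\prod_(j < m) p (t j)) * G t.
Definition Lf (R : rcfType) d m (f : 'I_d -> R) (t : {ffun 'I_m -> 'I_d}) :=
  \sum_(j < m) f (t j).
Definition ext d m (t : {ffun 'I_m -> 'I_d}) (k : 'I_d) : {ffun 'I_m.+1 -> 'I_d} :=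
  [ffun j => if unlift ord_max j is Some j' then t j' else k].

Lemma ext_lift d m t k (j : 'I_m) : @ext d m t k (lift ord_max j) = t j.
Proof. by rewrite ffunE liftK. Qed.
Lemma ext_max d m t k : @ext d m t k ord_max = k.
Proof. by rewrite ffunE unlift_none. Qed.
Lemma ext_widen d m t k (j : 'I_m) : @ext d m t k (widen_ord (leqnSn m) j) = t j.
Proof.
have -> : widen_ord (leqnSn m) j = lift ord_max j by apply: val_inj; rewrite /= /bump leqNgt ltn_ord.
exact: ext_lift.
Qed.

Lemma sum_ext (R : rcfType) d m (G : {ffun 'I_m.+1 -> 'I_d} -> R) :
  \sum_t G t = \sum_(t : {ffun 'I_m -> 'I_d}) \sum_k G (ext t k).
Proof.
rewrite pair_bigA /=.
rewrite (reindex (fun u : {ffun 'I_m -> 'I_d} * 'I_d => ext u.1 u.2)) //.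
exists (fun t : {ffun 'I_m.+1 -> 'I_d} => ([ffun j => t (lift ord_max j)], t ord_max)).
  move=> [t k] _ /=; congr (_, _); last by rewrite ext_max.
  by apply/ffunP => j; rewrite ffunE ext_lift.
move=> t _ /=; apply/ffunP => j; rewrite ffunE.
by case: unliftP => [j' ->|->] //; rewrite ffunE.
Qed.

Lemma Lf_ext (R : rcfType) d m (f : 'I_d -> R) t k :
  Lf f (@ext d m t k) = Lf f t + f k.
Proof. by rewrite /Lf big_ord_recr /= ext_max; congr (_ + _); apply: eq_bigr => j _; rewrite ext_widen. Qed.

Lemma Es_S (R : rcfType) d m (p : 'I_d -> R) G :
  Es p G = Es p (fun t : {ffun 'I_m -> 'I_d} => \sum_k p k * G (ext t k)).
Proof.
rewrite /Es sum_ext; apply: eq_bigr => t _; rewrite mulr_sumr; apply: eq_bigr => k _.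
rewrite big_ord_recr /= ext_max.
rewrite (eq_bigr (fun j => p (t j))); last by move=> j _; rewrite ext_widen.
by rewrite mulrA.
Qed.

Lemma eq_Es (R : rcfType) d m (p : 'I_d -> R) (G H : {ffun 'I_m -> 'I_d} -> R) :
  (forall t, G t = H t) -> Es p G = Es p H.
Proof. by move=> h; apply: eq_bigr => t _; rewrite h. Qed.

Lemma EsD (R : rcfType) d m (p : 'I_d -> R) (G H : {ffun 'I_m -> 'I_d} -> R) :
  Es p (fun t => G t + H t) = Es p G + Es p H.
Proof. by rewrite /Es -big_split; apply: eq_bigr => t _; rewrite mulrDr. Qed.

Lemma EsMc (R : rcfType) d m (p : 'I_d -> R) (G : {ffun 'I_m -> 'I_d} -> R) c :
  Es p (fun t => G t * c) = Es p G * c.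
Proof. by rewrite /Es mulr_suml; apply: eq_bigr => t _; rewrite mulrA. Qed.

Lemma Es_sum (R : rcfType) d m (p : 'I_d -> R) (G : 'I_d -> {ffun 'I_m -> 'I_d} -> R) :
  Es p (fun t => \sum_l G l t) = \sum_l Es p (G l).
Proof. rewrite /Es exchange_big /=; apply: eq_bigr => t _; by rewrite mulr_sumr. Qed.

Lemma Es1 (R : rcfType) d m (p : 'I_d -> R) : \sum_k p k = 1 ->
  Es p (fun _ : {ffun 'I_m -> 'I_d} => 1) = 1.
Proof.
move=> hp; elim: m => [|m IH].
  rewrite /Es (eq_bigr (fun _ => 1)); last by move=> t _; rewrite big_ord0 mulr1.
  by rewrite sumr_const card_ffun !card_ord expn0.
rewrite Es_S -{2}IH; apply: eq_Es => t; by rewrite -mulr_suml hp mul1r.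
Qed.

Lemma EsC (R : rcfType) d m (p : 'I_d -> R) c : \sum_k p k = 1 ->
  Es p (fun _ : {ffun 'I_m -> 'I_d} => c) = c.
Proof.
move=> hp; rewrite -[RHS]mul1r -(Es1 m hp) -EsMc; apply: eq_Es => t; by rewrite mul1r.
Qed.

Section Moments.
Variables (R : rcfType) (d : nat) (p : 'I_d -> R).
Hypothesis hp : \sum_k p k = 1.

Local Notation mu := (mu p).

Lemma exp1 X1 f1 : \sum_k p k * (X1 + f1 k) = X1 + mu f1.
Proof.
have e : X1 = \sum_k p k * X1 by rewrite -mulr_suml hp mul1r.
rewrite {2}e /mu -!big_split; apply: eq_bigr => k _ /=; ring.
Qed.

Lemma exp2 X1 X2 f1 f2 : \sum_k p k * ((X1 + f1 k) * (X2 + f2 k)) =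
  X1 * X2 + X1 * mu f2 + X2 * mu f1 + mu (fun k => f1 k * f2 k).
Proof.
have e : X1 * X2 = \sum_k p k * (X1 * X2) by rewrite -mulr_suml hp mul1r.
rewrite e /mu !mulr_sumr -!big_split; apply: eq_bigr => k _ /=; ring.
Qed.

Lemma exp3 X1 X2 X3 f1 f2 f3 :
  \sum_k p k * ((X1 + f1 k) * (X2 + f2 k) * (X3 + f3 k)) =
  X1 * X2 * X3 + X1 * X2 * mu f3 + X1 * X3 * mu f2 + X2 * X3 * mu f1
  + X1 * mu (fun k => f2 k * f3 k) + X2 * mu (fun k => f1 k * f3 k)
  + X3 * mu (fun k => f1 k * f2 k) + mu (fun k => f1 k * f2 k * f3 k).
Proof.
have e : X1 * X2 * X3 = \sum_k p k * (X1 * X2 * X3) by rewrite -mulr_suml hp mul1r.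
rewrite e /mu !mulr_sumr -!big_split; apply: eq_bigr => k _ /=; ring.
Qed.

Lemma exp4 X1 X2 X3 X4 f1 f2 f3 f4 :
  \sum_k p k * ((X1 + f1 k) * (X2 + f2 k) * (X3 + f3 k) * (X4 + f4 k)) =
  X1 * X2 * X3 * X4 + X1 * X2 * X3 * mu f4 + X1 * X2 * X4 * mu f3
  + X1 * X3 * X4 * mu f2 + X2 * X3 * X4 * mu f1
  + X1 * X2 * mu (fun k => f3 k * f4 k) + X1 * X3 * mu (fun k => f2 k * f4 k)
  + X1 * X4 * mu (fun k => f2 k * f3 k) + X2 * X3 * mu (fun k => f1 k * f4 k)
  + X2 * X4 * mu (fun k => f1 k * f3 k) + X3 * X4 * mu (fun k => f1 k * f2 k)
  + X1 * mu (fun k => f2 k * f3 k * f4 k) + X2 * mu (fun k => f1 k * f3 k * f4 k)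
  + X3 * mu (fun k => f1 k * f2 k * f4 k) + X4 * mu (fun k => f1 k * f2 k * f3 k)
  + mu (fun k => f1 k * f2 k * f3 k * f4 k).
Proof.
have e : X1 * X2 * X3 * X4 = \sum_k p k * (X1 * X2 * X3 * X4)
  by rewrite -mulr_suml hp mul1r.
rewrite e /mu !mulr_sumr -!big_split; apply: eq_bigr => k _ /=; ring.
Qed.

Lemma M1 m f : Es p (fun t : {ffun 'I_m -> 'I_d} => Lf f t) = m%:R * mu f.
Proof.
elim: m => [|m IH].
  by rewrite mul0r /Es big1 // => t _; rewrite /Lf !big_ord0 mulr0.
rewrite Es_S (@eq_Es _ _ _ _ _ (fun t => Lf f t + mu f)); last first.
  by move=> t; cbv beta; under eq_bigr => k _ do rewrite Lf_ext; rewrite exp1.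
by rewrite EsD IH EsC // -natr1; ring.
Qed.

Lemma M2 m f1 f2 : Es p (fun t : {ffun 'I_m -> 'I_d} => Lf f1 t * Lf f2 t) =
  m%:R * mu (fun k => f1 k * f2 k) + m%:R * (m%:R - 1) * (mu f1 * mu f2).
Proof.
elim: m => [|m IH].
  by rewrite !mul0r addr0 /Es big1 // => t _; rewrite /Lf !big_ord0; ring.
rewrite Es_S (@eq_Es _ _ _ _ _ (fun t => Lf f1 t * Lf f2 t + Lf f1 t * mu f2
   + Lf f2 t * mu f1 + mu (fun k => f1 k * f2 k))); last first.
  by move=> t; cbv beta; under eq_bigr => k _ do rewrite !Lf_ext; rewrite exp2.
by rewrite !EsD !EsMc IH !M1 EsC // -natr1; ring.
Qed.

Lemma M3 m f1 f2 f3 :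
  Es p (fun t : {ffun 'I_m -> 'I_d} => Lf f1 t * Lf f2 t * Lf f3 t) =
  m%:R * mu (fun k => f1 k * f2 k * f3 k)
  + m%:R * (m%:R - 1) * (mu (fun k => f1 k * f2 k) * mu f3
      + mu (fun k => f1 k * f3 k) * mu f2 + mu (fun k => f2 k * f3 k) * mu f1)
  + m%:R * (m%:R - 1) * (m%:R - 2) * (mu f1 * mu f2 * mu f3).
Proof.
elim: m => [|m IH].
  by rewrite !mul0r !addr0 /Es big1 // => t _; rewrite /Lf !big_ord0; ring.
rewrite Es_S (@eq_Es _ _ _ _ _ (fun t =>
  Lf f1 t * Lf f2 t * Lf f3 t + Lf f1 t * Lf f2 t * mu f3 + Lf f1 t * Lf f3 t * mu f2
  + Lf f2 t * Lf f3 t * mu f1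
  + Lf f1 t * mu (fun k => f2 k * f3 k) + Lf f2 t * mu (fun k => f1 k * f3 k)
  + Lf f3 t * mu (fun k => f1 k * f2 k) + mu (fun k => f1 k * f2 k * f3 k)));
  last by move=> t; cbv beta; under eq_bigr => k _ do rewrite !Lf_ext; rewrite exp3.
by rewrite !EsD !EsMc IH !M2 !M1 EsC // -natr1; ring.
Qed.

Lemma M4 m f1 f2 f3 f4 :
  Es p (fun t : {ffun 'I_m -> 'I_d} => Lf f1 t * Lf f2 t * Lf f3 t * Lf f4 t) =
  m%:R * mu (fun k => f1 k * f2 k * f3 k * f4 k)
  + m%:R * (m%:R - 1) * (mu (fun k => f1 k * f2 k * f3 k) * mu f4
      + mu (fun k => f1 k * f2 k * f4 k) * mu f3
      + mu (fun k => f1 k * f3 k * f4 k) * mu f2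
      + mu (fun k => f2 k * f3 k * f4 k) * mu f1)
  + m%:R * (m%:R - 1) * (mu (fun k => f1 k * f2 k) * mu (fun k => f3 k * f4 k)
      + mu (fun k => f1 k * f3 k) * mu (fun k => f2 k * f4 k)
      + mu (fun k => f1 k * f4 k) * mu (fun k => f2 k * f3 k))
  + m%:R * (m%:R - 1) * (m%:R - 2) * (
        mu (fun k => f1 k * f2 k) * mu f3 * mu f4
      + mu (fun k => f1 k * f3 k) * mu f2 * mu f4
      + mu (fun k => f1 k * f4 k) * mu f2 * mu f3
      + mu (fun k => f2 k * f3 k) * mu f1 * mu f4
      + mu (fun k => f2 k * f4 k) * mu f1 * mu f3
      + mu (fun k => f3 k * f4 k) * mu f1 * mu f2)
  + m%:R * (m%:R - 1) * (m%:R - 2) * (m%:R - 3) * (mu f1 * mu f2 * mu f3 * mu f4).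
Proof.
elim: m => [|m IH].
  by rewrite !mul0r !addr0 /Es big1 // => t _; rewrite /Lf !big_ord0; ring.
rewrite Es_S (@eq_Es _ _ _ _ _ (fun t =>
  Lf f1 t * Lf f2 t * Lf f3 t * Lf f4 t + Lf f1 t * Lf f2 t * Lf f3 t * mu f4
  + Lf f1 t * Lf f2 t * Lf f4 t * mu f3
  + Lf f1 t * Lf f3 t * Lf f4 t * mu f2 + Lf f2 t * Lf f3 t * Lf f4 t * mu f1
  + Lf f1 t * Lf f2 t * mu (fun k => f3 k * f4 k) + Lf f1 t * Lf f3 t * mu (fun k => f2 k * f4 k)
  + Lf f1 t * Lf f4 t * mu (fun k => f2 k * f3 k) + Lf f2 t * Lf f3 t * mu (fun k => f1 k * f4 k)
  + Lf f2 t * Lf f4 t * mu (fun k => f1 k * f3 k) + Lf f3 t * Lf f4 t * mu (fun k => f1 k * f2 k)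
  + Lf f1 t * mu (fun k => f2 k * f3 k * f4 k) + Lf f2 t * mu (fun k => f1 k * f3 k * f4 k)
  + Lf f3 t * mu (fun k => f1 k * f2 k * f4 k) + Lf f4 t * mu (fun k => f1 k * f2 k * f3 k)
  + mu (fun k => f1 k * f2 k * f3 k * f4 k)));
  last by move=> t; cbv beta; under eq_bigr => k _ do rewrite !Lf_ext; rewrite exp4.
by rewrite !EsD !EsMc IH !M3 !M2 !M1 EsC // -natr1; ring.
Qed.

End Moments.
Definition hq (R : rcfType) d (p : 'I_d -> R) (x : 'cV[R]_d) (mr : R) (i k : 'I_d) : R :=
  (i == k)%:R * (xc x k / (mr * p k)).
Definition qf (R : rcfType) d (p : 'I_d -> R) (x : 'cV[R]_d) (k : 'I_d) : R := xc x k / p k.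

Lemma SSx_entry (R : rcfType) d m (p : 'I_d -> R) (x : 'cV[R]_d) (t : {ffun 'I_m -> 'I_d}) i :
  (forall k, 0 <= p k) ->
  (Smat p t *m (Smat p t)^T *m x) i 0 = Lf (hq p x m%:R i) t.
Proof.
move=> hp0; rewrite mxE.
under eq_bigr => l _ do rewrite mxE big_distrl /=.
rewrite exchange_big /=; apply: eq_bigr => j _.
rewrite (bigD1 (t j)) //= big1 => [|l hl]; last first.
  by rewrite !mxE (negbTE hl) /= !mul0r mulr0 mul0r.
rewrite !mxE eqxx /= addr0 /hq.
have h := sqr_sqrtr (mulr_ge0 (ler0n R m) (hp0 (t j))).
set s := Num.sqrt _ in h *.
rewrite -h /xc; case: (i == t j); rewrite /= ?mul0r ?mul1r //.
by rewrite expr2 invfM; ring.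
Qed.

Lemma M_entry (R : rcfType) d m (p : 'I_d -> R) (x : 'cV[R]_d) (t : {ffun 'I_m -> 'I_d}) i j :
  (forall k, 0 <= p k) ->
  SSxxSS p x t i j = Lf (hq p x m%:R i) t * Lf (hq p x m%:R j) t.
Proof.
move=> hp0.
have -> : SSxxSS p x t = (Smat p t *m (Smat p t)^T *m x) *m (Smat p t *m (Smat p t)^T *m x)^T.
  by rewrite /SSxxSS !trmx_mul trmxK !mulmxA.
by rewrite mxE big_ord1 [(_^T) _ _]mxE !SSx_entry.
Qed.

Lemma ExpectE (R : rcfType) d m a b (p : 'I_d -> R) (F : {ffun 'I_m -> 'I_d} -> 'M[R]_(a, b)) i j :
  Expect p F i j = Es p (fun t => F t i j).
Proof. by rewrite /Expect summxE; apply: eq_bigr => t _; rewrite mxE. Qed.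

Lemma sum_delta (R : rcfType) d (c : 'I_d -> R) i j :
  (\sum_(k < d) c k *: delta_mx k k) i j = (i == j)%:R * c i.
Proof.
rewrite summxE (bigD1 i) //= big1 => [|k hk]; last by rewrite !mxE eq_sym (negbTE hk) mulr0.
by rewrite !mxE eqxx addr0 /= eq_sym mulrC.
Qed.

Lemma xxT (R : rcfType) d (x : 'cV[R]_d) i j : (x *m x^T) i j = xc x i * xc x j.
Proof. by rewrite mxE big_ord1 mxE. Qed.

Lemma mulDc (R : rcfType) d (A : 'M[R]_d) c i j : (A *m Dc c) i j = A i j * c j.
Proof. by rewrite /Dc mul_mx_diag !mxE. Qed.
Lemma Dcmul (R : rcfType) d (A : 'M[R]_d) c i j : (Dc c *m A) i j = c i * A i j.
Proof. by rewrite /Dc mul_diag_mx !mxE. Qed.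
Lemma DcD (R : rcfType) d (c1 c2 : 'I_d -> R) : Dc c1 + Dc c2 = Dc (fun k => c1 k + c2 k).
Proof. by apply/matrixP => i j; rewrite !mxE; case: (i == j); rewrite /= ?mulr1n ?mulr0n ?addr0. Qed.
Lemma DcZ (R : rcfType) d (c : 'I_d -> R) s : s *: Dc c = Dc (fun k => s * c k).
Proof. by apply/matrixP => i j; rewrite !mxE mulrnAr. Qed.
Lemma DgE (R : rcfType) d (A : 'M[R]_d) i j : Dg A i j = (i == j)%:R * A i i.
Proof. by rewrite /Dg !mxE mulr_natl. Qed.
Lemma Dgmul (R : rcfType) d (A B : 'M[R]_d) i j : (Dg A *m B) i j = A i i * B i j.
Proof. by rewrite /Dg mul_diag_mx !mxE. Qed.
Lemma mulDg (R : rcfType) d (A B : 'M[R]_d) i j : (B *m Dg A) i j = B i j * A j j.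
Proof. by rewrite /Dg mul_mx_diag !mxE. Qed.

Section Mu.
Variables (R : rcfType) (d : nat) (p : 'I_d -> R) (x : 'cV[R]_d) (mr : R).
Hypothesis hm : mr != 0.
Hypothesis hpx : forall k, p k = 0 -> xc x k = 0.

Lemma mu_delta (G : 'I_d -> R) a : mu p (fun k => (a == k)%:R * G k) = p a * G a.
Proof.
rewrite /mu (bigD1 a) //= big1 => [|k hk]; last by rewrite eq_sym (negbTE hk) mul0r mulr0.
by rewrite eqxx mul1r addr0.
Qed.

Lemma key a : p a * (xc x a / (mr * p a)) = xc x a / mr.
Proof.
have [h|h] := eqVneq (p a) 0; first by rewrite (hpx h) !mul0r mulr0.
by field; rewrite h hm.
Qed.

Lemma mu1 a : mu p (hq p x mr a) = xc x a / mr.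
Proof. by rewrite /hq mu_delta key. Qed.

Lemma mu2 a b : mu p (fun k => hq p x mr a k * hq p x mr b k) =
  (a == b)%:R * (xc x a * qf p x a / mr ^+ 2).
Proof.
rewrite (_ : mu p _ = mu p (fun k => (a == k)%:R * ((b == k)%:R * (xc x k / (mr * p k)) ^+ 2)));
  last by apply: eq_bigr => k _; rewrite /hq; ring.
rewrite mu_delta eq_sym /qf.
have [h|h] := eqVneq (p a) 0; first by rewrite (hpx h); ring.
by field; rewrite h hm.
Qed.

Lemma mu3 a b c : mu p (fun k => hq p x mr a k * hq p x mr b k * hq p x mr c k) =
  (a == b)%:R * (a == c)%:R * (xc x a * qf p x a ^+ 2 / mr ^+ 3).
Proof.
rewrite (_ : mu p _ = mu p (fun k => (a == k)%:R * ((b == k)%:R * (c == k)%:R * (xc x k / (mr * p k)) ^+ 3)));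
  last by apply: eq_bigr => k _; rewrite /hq; ring.
rewrite mu_delta [b == a]eq_sym [c == a]eq_sym /qf.
have [h|h] := eqVneq (p a) 0; first by rewrite (hpx h); ring.
by field; rewrite h hm.
Qed.

Lemma mu4 a b c e : mu p (fun k => hq p x mr a k * hq p x mr b k * hq p x mr c k * hq p x mr e k) =
  (a == b)%:R * (a == c)%:R * (a == e)%:R * (xc x a * qf p x a ^+ 3 / mr ^+ 4).
Proof.
rewrite (_ : mu p _ = mu p (fun k => (a == k)%:R * ((b == k)%:R * (c == k)%:R * (e == k)%:R * (xc x k / (mr * p k)) ^+ 4)));
  last by apply: eq_bigr => k _; rewrite /hq; ring.
rewrite mu_delta [b == a]eq_sym [c == a]eq_sym [e == a]eq_sym /qf.
have [h|h] := eqVneq (p a) 0; first by rewrite (hpx h); ring.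
by field; rewrite h hm.
Qed.
End Mu.

Lemma addE (R : rcfType) d (A B : 'M[R]_d) i j : (A + B) i j = A i j + B i j.
Proof. by rewrite mxE. Qed.
Lemma sclE (R : rcfType) d (A : 'M[R]_d) a i j : (a *: A) i j = a * A i j.
Proof. by rewrite mxE. Qed.

Lemma sum2 (R : rcfType) d (F G : 'I_d -> R) i :
  (forall l, l != i -> F l = G l) -> \sum_l F l = F i + \sum_l G l - G i.
Proof.
move=> h; rewrite (bigD1 i) //= [X in _ = _ + X - _](bigD1 i) //=.
rewrite (eq_bigr G); first ring.
by move=> l hl; exact: h.
Qed.

Lemma sum3 (R : rcfType) d (F G : 'I_d -> R) i j : i != j ->
  (forall l, l != i -> l != j -> F l = G l) ->
  \sum_l F l = F i + F j + \sum_l G l - G i - G j.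
Proof.
move=> hij h.
have hji : j != i by rewrite eq_sym.
rewrite (bigD1 i) //= (bigD1 j) //= [X in _ = _ + X - _ - _](bigD1 i) //= [X in _ = _ + (_ + X) - _ - _](bigD1 j) //=.
rewrite (eq_bigr G); first ring.
by move=> l /andP [hl1 hl2]; exact: h.
Qed.

Unset Implicit Arguments.

Theorem lemma1 (R : rcfType) (d m : nat) (x : 'cV[R]_d) (alpha : R) :
  x != 0 -> (0 < m)%N -> (m < d)%N -> 0 < alpha -> alpha < 1 ->
  let p := pk alpha x in
  let M := @SSxxSS R d m p x in
  let mr : R := m%:R in
  let xk := xc x in
  let sl := \sum_(l < d) xk l ^+ 2 / p l in
  (Expect p M =
     \sum_(k < d) (xk k ^+ 2 / (mr * p k)) *: delta_mx k k
     + ((mr - 1) / mr) *: (x *m x^T)) /\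
   (Expect p (fun t => Dg (M t)) =
     \sum_(k < d) ((1 / (mr * p k) + (mr - 1) / mr) * xk k ^+ 2) *: delta_mx k k) /\
   (Expect p (fun t => Dg (M t) *m Dg (M t)) =
     \sum_(k < d)
       ((1 / (mr ^+ 3 * p k ^+ 3) + 7%:R * (mr - 1) / (mr ^+ 3 * p k ^+ 2)
         + 6%:R * (mr ^+ 2 - 3%:R * mr + 2%:R) / (mr ^+ 3 * p k)
         + (mr ^+ 3 - 6%:R * mr ^+ 2 + 11%:R * mr - 6%:R) / mr ^+ 3)
        * xk k ^+ 4) *: delta_mx k k) /\
   (Expect p (fun t => M t *m Dg (M t)) =
     (Expect p (fun t => Dg (M t) *m M t))^T) /\
   (   Expect p (fun t => M t *m Dg (M t)) =
     \sum_(k < d)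
       ((1 / (mr ^+ 3 * p k ^+ 3) + 6%:R * (mr - 1) / (mr ^+ 3 * p k ^+ 2)
         + 3%:R * (mr ^+ 2 - 3%:R * mr + 2%:R) / (mr ^+ 3 * p k))
        * xk k ^+ 4) *: delta_mx k k
     + ((mr - 1) / mr ^+ 3) *: (x *m x^T *m Dc (fun k => xk k ^+ 2 / p k ^+ 2))
     + (3%:R * (mr ^+ 2 - 3%:R * mr + 2%:R) / mr ^+ 3) *:
         (x *m x^T *m (Dc (fun k => xk k ^+ 2 / p k)
                       + ((mr - 3%:R) / 3%:R) *: Dc (fun k => xk k ^+ 2)))) /\
   (Expect p (fun t => M t *m M t) =
     \sum_(k < d)
       ((4%:R * (mr - 1) / (mr ^+ 3 * p k ^+ 2) + 1 / (mr ^+ 3 * p k ^+ 3))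
        * xk k ^+ 4) *: delta_mx k k
     + \sum_(k < d)
       ((norm2sq x * (mr ^+ 2 - 3%:R * mr + 2%:R) / mr ^+ 3
         + (mr - 1) / mr ^+ 3 * sl) * (xk k ^+ 2 / p k)) *: delta_mx k k
     + (norm2sq x * (mr ^+ 3 - 6%:R * mr ^+ 2 + 11%:R * mr - 6%:R) / mr ^+ 3
        + (mr ^+ 2 - 3%:R * mr + 2%:R) / mr ^+ 3 * sl) *: (x *m x^T)
     + x *m x^T *m ((2%:R * (mr ^+ 2 - 3%:R * mr + 2%:R) / mr ^+ 3)
                      *: Dc (fun k => xk k ^+ 2 / p k)
                    + ((mr - 1) / mr ^+ 3) *: Dc (fun k => xk k ^+ 2 / p k ^+ 2))
     + ((2%:R * (mr ^+ 2 - 3%:R * mr + 2%:R) / mr ^+ 3)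
          *: Dc (fun k => xk k ^+ 2 / p k)
        + ((mr - 1) / mr ^+ 3) *: Dc (fun k => xk k ^+ 2 / p k ^+ 2)) *m (x *m x^T)).
Proof.
move=> hx hm0 hmd ha0 ha1 p M mr xk sl.
have [k0 hk0] : exists k, xc x k != 0.
  case: (pickP (fun k => xc x k != 0)) => [k hk|h]; first by exists k.
  case/negP: hx; apply/eqP/matrixP => i j; rewrite (ord1 j) mxE.
  by move: (h i) => /= /negbFE /eqP.
have n1p : 0 < norm1 x.
  rewrite /norm1 (bigD1 k0) //=.
  have s0 : 0 <= \sum_(k | k != k0) `|xc x k| by apply: sumr_ge0 => k _; rewrite normr_ge0.
  have : 0 < `|xc x k0| by rewrite normr_gt0.
  lra.
have n2p : 0 < norm2sq x.
  rewrite /norm2sq (bigD1 k0) //=.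
  have s0 : 0 <= \sum_(k | k != k0) xc x k ^+ 2 by apply: sumr_ge0 => k _; rewrite sqr_ge0.
  have : 0 < xc x k0 ^+ 2 by rewrite exprn_even_gt0.
  lra.
have hp0 : forall k, 0 <= p k.
  move=> k; rewrite /p /pk; apply: addr_ge0; apply: mulr_ge0.
  - exact: ltW.
  - by rewrite divr_ge0 ?normr_ge0 // ltW.
  - by rewrite subr_ge0 ltW.
  - by rewrite divr_ge0 ?sqr_ge0 // ltW.
have hpx : forall k, p k = 0 -> xc x k = 0.
  move=> k; apply: contra_eq => hk.
  have h1 : 0 < alpha * (`|xc x k| / norm1 x) by rewrite mulr_gt0 // divr_gt0 // normr_gt0.
  have h2 : 0 <= (1 - alpha) * (xc x k ^+ 2 / norm2sq x).
    apply: mulr_ge0; first by rewrite subr_ge0 ltW.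
    by rewrite divr_ge0 ?sqr_ge0 // ltW.
  by rewrite /p /pk; apply/eqP; lra.
have hp1 : \sum_k p k = 1.
  rewrite /p /pk big_split /= -!mulr_sumr -!mulr_suml.
  rewrite -/(norm1 x) -/(norm2sq x) !divff ?gt_eqF //; ring.
have hm : mr != 0 by rewrite /mr pnatr_eq0 -lt0n.
have hME : forall t i j, M t i j = Lf (hq p x mr i) t * Lf (hq p x mr j) t.
  by move=> t i j; rewrite /M M_entry.
clearbody p.
have E2 : forall i j, Es p (fun t => M t i j) =
    mr * ((i == j)%:R * (xk i * qf p x i / mr ^+ 2)) + mr * (mr - 1) * (xk i / mr * (xk j / mr)).
  move=> i j; rewrite (@eq_Es _ _ _ _ _ (fun t => Lf (hq p x mr i) t * Lf (hq p x mr j) t)) //.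
  by rewrite M2 // !(mu1 hm hpx) !(mu2 hm hpx) -/mr.
split.
  apply/matrixP => i j; rewrite ExpectE E2 mxE sum_delta mxE xxT /qf /xk.
  rewrite !invfM; move: (p i)^-1 => w.
  by field.
split.
  apply/matrixP => i j; rewrite ExpectE sum_delta.
  rewrite (@eq_Es _ _ _ _ _ (fun t => M t i i * (i == j)%:R)); last by move=> t; rewrite DgE mulrC.
  rewrite EsMc E2.
  rewrite /qf /xk; have [e|hij] := eqVneq i j; rewrite /=;
    [subst j; rewrite ?eqxx /= !invfM -?exprVn; move: (p i)^-1 => wi; field; exact: hm
    |rewrite ?eqxx ?(negbTE hij) /= !invfM -?exprVn; move: (p i)^-1 (p j)^-1 => wi wj; field; exact: hm].
split.
  apply/matrixP => i j; rewrite ExpectE sum_delta.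
  rewrite (@eq_Es _ _ _ _ _ (fun t => Lf (hq p x mr i) t * Lf (hq p x mr i) t * Lf (hq p x mr i) t * Lf (hq p x mr i) t * (i == j)%:R)); last by move=> t; rewrite Dgmul DgE !hME; ring.
  rewrite EsMc M4 // !(mu1 hm hpx) !(mu2 hm hpx) !(mu3 hm hpx) !(mu4 hm hpx) -/mr.
  rewrite /qf /xk; have [e|hij] := eqVneq i j; rewrite /=;
    [subst j; rewrite ?eqxx /= !invfM -?exprVn; move: (p i)^-1 => wi; field; exact: hm
    |rewrite ?eqxx ?(negbTE hij) /= !invfM -?exprVn; move: (p i)^-1 (p j)^-1 => wi wj; field; exact: hm].
split.
  apply/matrixP => i j; rewrite mxE !ExpectE; apply: eq_Es => t.
  by rewrite mulDg Dgmul !hME; ring.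
split.
  apply/matrixP => i j; rewrite ExpectE DcZ DcD !addE !sclE sum_delta !mulDc !xxT.
  rewrite (@eq_Es _ _ _ _ _ (fun t => Lf (hq p x mr i) t * Lf (hq p x mr j) t * Lf (hq p x mr j) t * Lf (hq p x mr j) t * 1)); last by move=> t; rewrite mulDg !hME; ring.
  rewrite EsMc M4 // !(mu1 hm hpx) !(mu2 hm hpx) !(mu3 hm hpx) !(mu4 hm hpx) -/mr.
  rewrite /qf /xk; have [e|hij] := eqVneq i j; rewrite /=;
    [subst j; rewrite ?eqxx /= !invfM -?exprVn; move: (p i)^-1 => wi; field; exact: hm
    |rewrite ?eqxx ?(negbTE hij) /= !invfM -?exprVn; move: (p i)^-1 (p j)^-1 => wi wj; field; exact: hm].
apply/matrixP => i j; rewrite ExpectE !DcZ !DcD !addE !sclE !sum_delta mulDc Dcmul !xxT.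
rewrite (@eq_Es _ _ _ _ _ (fun t => \sum_l Lf (hq p x mr i) t * Lf (hq p x mr l) t * Lf (hq p x mr l) t * Lf (hq p x mr j) t * 1)); last first.
  by move=> t; rewrite mxE; apply: eq_bigr => l _; rewrite !hME; ring.
rewrite Es_sum.
under eq_bigr => l _ do rewrite EsMc M4 // !(mu1 hm hpx) !(mu2 hm hpx) !(mu3 hm hpx) !(mu4 hm hpx) -/mr.
have hsl : \sum_l xc x l * qf p x l = sl by apply: eq_bigr => l _; rewrite /qf /xk; ring.
have hn2 : \sum_l xc x l ^+ 2 = norm2sq x by [].
rewrite /xk.
have [e|hij] := eqVneq i j.
  subst j.
  rewrite (@sum2 _ _ _ (fun l => ((mr - 1) / mr * (xc x i * qf p x i / mr ^+ 2) + (mr - 1) * (mr - 2) / mr ^+ 3 * (xc x i * xc x i)) * (xc x l * qf p x l) + ((mr - 1) * (mr - 2) / mr * (xc x i * qf p x i / mr ^+ 2) + (mr - 1) * (mr - 2) * (mr - 3) / mr ^+ 3 * (xc x i * xc x i)) * xc x l ^+ 2) i); last first.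
    move=> l hl; rewrite eqxx [i == l]eq_sym (negbTE hl) /=; field; exact: hm.
  cbv beta; rewrite big_split /= -!mulr_sumr hsl hn2 eqxx /=.
  rewrite /qf !invfM -?exprVn; move: (p i)^-1 => wi; field; exact: hm.
rewrite (@sum3 _ _ _ (fun l => ((mr - 1) * (mr - 2) / mr ^+ 3 * (xc x i * xc x j)) * (xc x l * qf p x l) + ((mr - 1) * (mr - 2) * (mr - 3) / mr ^+ 3 * (xc x i * xc x j)) * xc x l ^+ 2) i j hij); last first.
  move=> l hli hlj; rewrite eqxx [i == l]eq_sym (negbTE hli) (negbTE hlj) /=; field; exact: hm.
cbv beta; rewrite big_split /= -!mulr_sumr hsl hn2 eqxx /=.
rewrite (negbTE hij) ?[j == i]eq_sym ?(negbTE hij) /=.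
rewrite /qf !invfM -?exprVn !eqxx /=; move: (p i)^-1 (p j)^-1 => wi wj; field; exact: hm.
Qed.
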